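(* Let $a,b>0$ and consider the symmetric Rock-Paper-Scissors game with payoff matrix $$A=\begin{pmatrix}0&-a&b\\ b&0&-a\\ -a&b&0\end{pmatrix}.$$ Writing $(x,y,z)$ for the shares of strategies 1, 2, 3, the IBR dynamics for $A$ is $$\dot x=x(z-y)(1-xy-xz-yz),\quad \dot y=y(x-z)(1-xy-xz-yz),\quad \dot z=z(y-x)(1-xy-xz-yz).$$ Its unique rest point in the interior of $\Delta$ is $(\tfrac13,\tfrac13,\tfrac13)$, and every solution starting in the interior of $\Delta$ at a state other than $(\tfrac13,\tfrac13,\tfrac13)$ is a closed orbit (a nonconstant periodic solution) around $(\tfrac13,\tfrac13,\tfrac13)$.
   Context: Let $n\ge 2$ and consider a symmetric two-player game with strategy set $S=\{1,\dots,n\}$ and payoff matrix $A=(\pi_{ij})_{i,j\in S}$, where $\pi_{ij}\in\mathbb{R}$ is the payoff of a player using strategy $i$ against an opponent using strategy $j$. The state space is the simplex $\Delta=\{x\in\mathbb{R}^n: x_i\ge 0,\ \sum_i x_i=1\}$, where $x_i$ is the population share using strategy $i$. The imitate-the-better-realization (IBR) dynamics is the ODE on $\Delta$ $$\dot x_i = x_i\sum_{j=1}^n\sum_{k=1}^n\sum_{m=1}^n x_jx_kx_m\big(\mathbf 1\{\pi_{jk}<\pi_{im}\}-\mathbf 1\{\pi_{jk}>\pi_{im}\}\big),\quad i\in S.$$ Here $n=3$. *)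

(* Defs.v *)
From Stdlib Require Import Reals Lra.
Open Scope R_scope.

Fixpoint rsum (n : nat) (f : nat -> R) : R :=
  match n with
  | O => 0
  | S n' => rsum n' f + f n'
  end.

Definition cmp_sign (p q : R) : R :=
  (if Rlt_dec p q then 1 else 0) - (if Rlt_dec q p then 1 else 0).

(* IBR vector field for n strategies (indexed 0..n-1) and payoff pi;
   states are x : nat -> R (only indices < n matter). *)
Definition ibr (n : nat) (pi : nat -> nat -> R) (x : nat -> R) (i : nat) : R :=
  x i * rsum n (fun j => rsum n (fun k => rsum n (fun m =>
          x j * x k * x m * cmp_sign (pi j k) (pi i m)))).

(* Rock-Paper-Scissors payoff matrix, strategies 1,2,3 indexed 0,1,2. *)
Definition rps (a b : R) (i j : nat) : R :=
  match i, j with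
  | 0%nat, 0%nat => 0 | 0%nat, 1%nat => - a | 0%nat, 2%nat => b
  | 1%nat, 0%nat => b | 1%nat, 1%nat => 0 | 1%nat, 2%nat => - a
  | 2%nat, 0%nat => - a | 2%nat, 1%nat => b | 2%nat, 2%nat => 0
  | _, _ => 0
  end.

Definition in_simplex3 (x : nat -> R) : Prop :=
  0 <= x 0%nat /\ 0 <= x 1%nat /\ 0 <= x 2%nat /\ x 0%nat + x 1%nat + x 2%nat = 1.
Definition in_interior3 (x : nat -> R) : Prop :=
  0 < x 0%nat /\ 0 < x 1%nat /\ 0 < x 2%nat /\ x 0%nat + x 1%nat + x 2%nat = 1.

Definition is_center3 (x : nat -> R) : Prop :=
  x 0%nat = 1/3 /\ x 1%nat = 1/3 /\ x 2%nat = 1/3.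

Definition is_solution3 (F : (nat -> R) -> nat -> R) (phi : R -> nat -> R) : Prop :=
  forall (t : R) (i : nat), (i < 3)%nat ->
    derivable_pt_lim (fun s => phi s i) t (F (phi t) i).

(* Main.v *)
Require Import Defs.
From Stdlib Require Import Reals Lra Psatz Classical.
From Coquelicot Require Import Coquelicot.
Open Scope R_scope.

Definition Qf (x : nat -> R) : R :=
  x 0%nat * x 0%nat + x 1%nat * x 1%nat + x 2%nat * x 2%nat
  + x 0%nat * x 1%nat + x 1%nat * x 2%nat + x 2%nat * x 0%nat.

Definition Fp (x : nat -> R) (i : nat) : R :=
  match i with
  | 0%nat => x 0%nat * (x 2%nat - x 1%nat) * Qf x
  | 1%nat => x 1%nat * (x 0%nat - x 2%nat) * Qf x
  | 2%nat => x 2%nat * (x 1%nat - x 0%nat) * Qf x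
  | _ => 0
  end.

Lemma cmp_eq p : cmp_sign p p = 0.
Proof. unfold cmp_sign; destruct (Rlt_dec p p); [lra|]; lra. Qed.
Lemma cmp_lt p q : p < q -> cmp_sign p q = 1.
Proof. intro h; unfold cmp_sign; destruct (Rlt_dec p q); destruct (Rlt_dec q p); lra. Qed.
Lemma cmp_gt p q : q < p -> cmp_sign p q = -1.
Proof. intro h; unfold cmp_sign; destruct (Rlt_dec p q); destruct (Rlt_dec q p); lra. Qed.

Lemma ibr_poly a b x i : 0 < a -> 0 < b -> (i < 3)%nat ->
  ibr 3 (rps a b) x i = Fp x i.
Proof.
  intros ha hb hi.
  assert (h1 : -a < 0) by lra. assert (h2 : -a < b) by lra.
  assert (e1 := cmp_lt _ _ h1). assert (e2 := cmp_lt _ _ hb). assert (e3 := cmp_lt _ _ h2).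
  assert (e4 := cmp_gt _ _ h1). assert (e5 := cmp_gt _ _ hb). assert (e6 := cmp_gt _ _ h2).
  assert (e7 := cmp_eq 0). assert (e8 := cmp_eq (-a)). assert (e9 := cmp_eq b).
  destruct i as [|[|[|i]]]; [| | | lia];
  unfold ibr, Fp, Qf; simpl rsum; simpl rps; rewrite ?e1, ?e2, ?e3, ?e4, ?e5, ?e6, ?e7, ?e8, ?e9; ring.
Qed.

Lemma Qf_simplex x : x 0%nat + x 1%nat + x 2%nat = 1 ->
  Qf x = 1 - x 0%nat * x 1%nat - x 0%nat * x 2%nat - x 1%nat * x 2%nat.
Proof.
  intro h. unfold Qf. replace (x 2%nat) with (1 - x 0%nat - x 1%nat) by lra. ring.
Qed.

Lemma Qf_pos x : x 0%nat + x 1%nat + x 2%nat = 1 -> 2/3 <= Qf x.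
Proof.
  intro h. rewrite Qf_simplex by auto. replace (x 2%nat) with (1 - x 0%nat - x 1%nat) by lra.
  assert (H1 := pow2_ge_0 (x 0%nat - x 1%nat)). assert (H2 := pow2_ge_0 (x 0%nat + x 1%nat - 2/3)). nra.
Qed.

Lemma part1 a b : 0 < a -> 0 < b ->
  (forall x : nat -> R, in_simplex3 x ->
     let '(p, q, r) := (x 0%nat, x 1%nat, x 2%nat) in
     ibr 3 (rps a b) x 0%nat = p * (r - q) * (1 - p*q - p*r - q*r) /\
     ibr 3 (rps a b) x 1%nat = q * (p - r) * (1 - p*q - p*r - q*r) /\
     ibr 3 (rps a b) x 2%nat = r * (q - p) * (1 - p*q - p*r - q*r)).
Proof.
  intros ha hb x [h0 [h1 [h2 hs]]]. simpl.
  rewrite !ibr_poly by (auto; lia). unfold Fp. rewrite Qf_simplex by auto.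
  repeat split; ring.
Qed.

Lemma part2 a b : 0 < a -> 0 < b ->
  (forall x : nat -> R, in_interior3 x ->
     ((forall i : nat, (i < 3)%nat -> ibr 3 (rps a b) x i = 0) <-> is_center3 x)).
Proof.
  intros ha hb x [h0 [h1 [h2 hs]]]. split.
  - intro H. assert (HQ := Qf_pos x hs).
    assert (E0 := H 0%nat ltac:(lia)). assert (E1 := H 1%nat ltac:(lia)).
    rewrite ibr_poly in E0, E1 by (auto; lia). unfold Fp in E0, E1.
    assert (x 2%nat - x 1%nat = 0).
    { apply Rmult_integral in E0. destruct E0 as [E0|E0]; [|lra].
      apply Rmult_integral in E0. destruct E0; lra. }
    assert (x 0%nat - x 2%nat = 0).
    { apply Rmult_integral in E1. destruct E1 as [E1|E1]; [|lra].
      apply Rmult_integral in E1. destruct E1; lra. }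
    unfold is_center3; lra.
  - intros [c0 [c1 c2]] i hi. rewrite ibr_poly by auto.
    destruct i as [|[|[|i]]]; [| | | lia]; unfold Fp; rewrite c0, c1, c2; ring.
Qed.

Lemma Fp_sum x : Fp x 0%nat + Fp x 1%nat + Fp x 2%nat = 0.
Proof. unfold Fp; ring. Qed.

Lemma Fp_prod x : x 1%nat * x 2%nat * Fp x 0%nat + x 0%nat * x 2%nat * Fp x 1%nat
  + x 0%nat * x 1%nat * Fp x 2%nat = 0.
Proof. unfold Fp; ring. Qed.

Definition box (x : nat -> R) : Prop :=
  0 <= x 0%nat <= 1 /\ 0 <= x 1%nat <= 1 /\ 0 <= x 2%nat <= 1.

Definition Nd (u v : nat -> R) : R :=
  Rabs (u 0%nat - v 0%nat) + Rabs (u 1%nat - v 1%nat) + Rabs (u 2%nat - v 2%nat).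

Lemma abs_prod_diff a1 a2 b1 b2 B1 B2 : Rabs a2 <= B2 -> Rabs b1 <= B1 ->
  Rabs (a1*a2 - b1*b2) <= Rabs (a1-b1)*B2 + B1*Rabs (a2-b2).
Proof.
  intros h2 h1.
  replace (a1*a2 - b1*b2) with ((a1-b1)*a2 + b1*(a2-b2)) by ring.
  eapply Rle_trans; [apply Rabs_triang|]. rewrite !Rabs_mult.
  apply Rplus_le_compat.
  - apply Rmult_le_compat_l; [apply Rabs_pos|auto].
  - apply Rmult_le_compat_r; [apply Rabs_pos|auto].
Qed.

Lemma abs01 r : 0 <= r <= 1 -> Rabs r <= 1.
Proof. intro h; rewrite Rabs_right; lra. Qed.

Lemma Qf_box x : box x -> 0 <= Qf x <= 6.
Proof. intros [h0 [h1 h2]]; unfold Qf; split; nra. Qed.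

Lemma absle r c : Rabs r <= c -> -c <= r <= c.
Proof. intro h. unfold Rabs in h. destruct (Rcase_abs r); lra. Qed.
Lemma leabs r c : -c <= r <= c -> Rabs r <= c.
Proof. intro h. unfold Rabs. destruct (Rcase_abs r); lra. Qed.

Lemma prod2_lip a1 a2 b1 b2 : 0 <= a2 <= 1 -> 0 <= b1 <= 1 ->
  Rabs (a1*a2 - b1*b2) <= Rabs (a1-b1) + Rabs (a2-b2).
Proof.
  intros h2 h1. assert (hh := abs_prod_diff a1 a2 b1 b2 1 1 (abs01 _ h2) (abs01 _ h1)). lra.
Qed.

Lemma Qf_lip u v : box u -> box v -> Rabs (Qf u - Qf v) <= 4 * Nd u v.
Proof.
  intros hu hv. pose proof hu as [u0 [u1 u2]]. pose proof hv as [v0 [v1 v2]].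
  unfold Qf, Nd.
  assert (A1 := absle _ _ (prod2_lip (u 0%nat) (u 0%nat) (v 0%nat) (v 0%nat) u0 v0)).
  assert (A2 := absle _ _ (prod2_lip (u 1%nat) (u 1%nat) (v 1%nat) (v 1%nat) u1 v1)).
  assert (A3 := absle _ _ (prod2_lip (u 2%nat) (u 2%nat) (v 2%nat) (v 2%nat) u2 v2)).
  assert (A4 := absle _ _ (prod2_lip (u 0%nat) (u 1%nat) (v 0%nat) (v 1%nat) u1 v0)).
  assert (A5 := absle _ _ (prod2_lip (u 1%nat) (u 2%nat) (v 1%nat) (v 2%nat) u2 v1)).
  assert (A6 := absle _ _ (prod2_lip (u 2%nat) (u 0%nat) (v 2%nat) (v 0%nat) u0 v2)).
  apply leabs. lra.
Qed.

Lemma Fp_bound x i : box x -> Rabs (Fp x i) <= 6.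
Proof.
  intro hx. assert (hq := Qf_box x hx). destruct hx as [h0 [h1 h2]].
  destruct i as [|[|[|i]]]; unfold Fp; [| | | rewrite Rabs_R0; lra];
  rewrite !Rabs_mult; rewrite (Rabs_right (Qf x)) by lra.
  - assert (Rabs (x 0%nat) <= 1) by (apply abs01; lra).
    assert (Rabs (x 2%nat - x 1%nat) <= 1) by (apply leabs; lra).
    assert (0 <= Rabs (x 0%nat)) by apply Rabs_pos.
    assert (0 <= Rabs (x 2%nat - x 1%nat)) by apply Rabs_pos.
    match goal with |- ?A * ?B * ?C <= _ => assert (A*B <= 1) by nra; assert (0 <= A*B) by nra end. nra.
  - assert (Rabs (x 1%nat) <= 1) by (apply abs01; lra).
    assert (Rabs (x 0%nat - x 2%nat) <= 1) by (apply leabs; lra).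
    assert (0 <= Rabs (x 1%nat)) by apply Rabs_pos.
    assert (0 <= Rabs (x 0%nat - x 2%nat)) by apply Rabs_pos.
    match goal with |- ?A * ?B * ?C <= _ => assert (A*B <= 1) by nra; assert (0 <= A*B) by nra end. nra.
  - assert (Rabs (x 2%nat) <= 1) by (apply abs01; lra).
    assert (Rabs (x 1%nat - x 0%nat) <= 1) by (apply leabs; lra).
    assert (0 <= Rabs (x 2%nat)) by apply Rabs_pos.
    assert (0 <= Rabs (x 1%nat - x 0%nat)) by apply Rabs_pos.
    match goal with |- ?A * ?B * ?C <= _ => assert (A*B <= 1) by nra; assert (0 <= A*B) by nra end. nra.
Qed.

Lemma prod3_lip a1 a2 a3 b1 b2 b3 : 0 <= a1 <= 1 -> 0 <= b1 <= 1 ->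
  Rabs a2 <= 1 -> Rabs b2 <= 1 -> 0 <= a3 <= 6 -> 0 <= b3 <= 6 ->
  Rabs (a1*a2*a3 - b1*b2*b3) <= 6 * Rabs (a1-b1) + 6 * Rabs (a2-b2) + Rabs (a3 - b3).
Proof.
  intros h1 g1 h2 g2 h3 g3.
  assert (R1 : Rabs (b1*b2) <= 1).
  { rewrite Rabs_mult. assert (0 <= Rabs b2) by apply Rabs_pos. rewrite (Rabs_right b1) by lra. nra. }
  assert (hh := abs_prod_diff (a1*a2) a3 (b1*b2) b3 1 6 ltac:(apply leabs; lra) R1).
  assert (hh2 := abs_prod_diff a1 a2 b1 b2 1 1 h2 ltac:(apply leabs; lra)).
  assert (0 <= Rabs (a3 - b3)) by apply Rabs_pos. lra.
Qed.

Lemma Fp_lip u v i : box u -> box v -> Rabs (Fp u i - Fp v i) <= 20 * Nd u v.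
Proof.
  intros hu hv. assert (hq := Qf_lip u v hu hv). assert (qu := Qf_box u hu). assert (qv := Qf_box v hv).
  pose proof hu as [u0 [u1 u2]]. pose proof hv as [v0 [v1 v2]].
  assert (0 <= Nd u v) by (unfold Nd; assert (H1 := Rabs_pos (u 0%nat - v 0%nat));
     assert (H2 := Rabs_pos (u 1%nat - v 1%nat)); assert (H3 := Rabs_pos (u 2%nat - v 2%nat)); lra).
  assert (D : forall j k, Rabs ((u j - u k) - (v j - v k)) <= Rabs (u j - v j) + Rabs (u k - v k)).
  { intros j k. replace ((u j - u k) - (v j - v k)) with ((u j - v j) + - (u k - v k)) by ring.
    eapply Rle_trans; [apply Rabs_triang|]. rewrite Rabs_Ropp. lra. }
  destruct i as [|[|[|i]]]; unfold Fp; [| | | rewrite Rminus_0_r, Rabs_R0; lra].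
  - eapply Rle_trans; [apply prod3_lip; auto; apply leabs; lra|].
    assert (hd := D 2%nat 1%nat). unfold Nd in *. lra.
  - eapply Rle_trans; [apply prod3_lip; auto; apply leabs; lra|].
    assert (hd := D 0%nat 2%nat). unfold Nd in *. lra.
  - eapply Rle_trans; [apply prod3_lip; auto; apply leabs; lra|].
    assert (hd := D 1%nat 0%nat). unfold Nd in *. lra.
Qed.



Section Deriv.
Lemma D_plus f g x df dg : derivable_pt_lim f x df -> derivable_pt_lim g x dg ->
  derivable_pt_lim (fun t => f t + g t) x (df + dg).
Proof. rewrite <- !is_derive_Reals. intros h1 h2. exact (is_derive_plus f g x df dg h1 h2). Qed.
Lemma D_minus f g x df dg : derivable_pt_lim f x df -> derivable_pt_lim g x dg ->
  derivable_pt_lim (fun t => f t - g t) x (df - dg).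
Proof. rewrite <- !is_derive_Reals. intros h1 h2. exact (is_derive_minus f g x df dg h1 h2). Qed.
Lemma D_mult f g x df dg : derivable_pt_lim f x df -> derivable_pt_lim g x dg ->
  derivable_pt_lim (fun t => f t * g t) x (df * g x + f x * dg).
Proof. rewrite <- !is_derive_Reals. intros h1 h2. exact (is_derive_mult f g x df dg h1 h2 Rmult_comm). Qed.
Lemma D_const c x : derivable_pt_lim (fun _ => c) x 0.
Proof. rewrite <- is_derive_Reals. exact (is_derive_const c x). Qed.
Lemma D_id x : derivable_pt_lim (fun t => t) x 1.
Proof. rewrite <- is_derive_Reals. exact (is_derive_id x). Qed.
Lemma D_comp h g x dh dg : derivable_pt_lim h (g x) dh -> derivable_pt_lim g x dg ->
  derivable_pt_lim (fun t => h (g t)) x (dg * dh).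
Proof. rewrite <- !is_derive_Reals. intros h1 h2. exact (is_derive_comp h g x dh dg h1 h2). Qed.
Lemma D_div f g x df dg : derivable_pt_lim f x df -> derivable_pt_lim g x dg -> g x <> 0 ->
  derivable_pt_lim (fun t => f t / g t) x ((df * g x - f x * dg) / g x ^ 2).
Proof. rewrite <- !is_derive_Reals. intros h1 h2 h3. exact (is_derive_div f g x df dg h1 h2 h3). Qed.
Lemma D_val f x l l' : derivable_pt_lim f x l -> l = l' -> derivable_pt_lim f x l'.
Proof. intros h e; subst; auto. Qed.
Lemma D_ext f g x l : (forall t, f t = g t) -> derivable_pt_lim f x l -> derivable_pt_lim g x l.
Proof. rewrite <- !is_derive_Reals. intros e h. exact (is_derive_ext f g x l e h). Qed.
Lemma D_cos x : derivable_pt_lim cos x (- sin x).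
Proof. rewrite <- is_derive_Reals. exact (is_derive_cos x). Qed.
Lemma D_sin x : derivable_pt_lim sin x (cos x).
Proof. rewrite <- is_derive_Reals. exact (is_derive_sin x). Qed.
Lemma D_exp x : derivable_pt_lim exp x (exp x).
Proof. rewrite <- is_derive_Reals. exact (is_derive_exp x). Qed.
End Deriv.

Lemma D_cont f x l : derivable_pt_lim f x l -> continuity_pt f x.
Proof.
  intro h. apply continuity_pt_filterlim. apply (@ex_derive_continuous R_AbsRing R_NormedModule).
  exists l. apply is_derive_Reals. auto.
Qed.

Lemma D_continuous f x l : derivable_pt_lim f x l -> continuous f x.
Proof. intro h. apply (@ex_derive_continuous R_AbsRing R_NormedModule). exists l. apply is_derive_Reals. auto. Qed.

Lemma D_nonincr f df : (forall t, derivable_pt_lim f t (df t)) -> (forall t, df t <= 0) ->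
  forall s t, s <= t -> f t <= f s.
Proof.
  intros hd hn s t hst.
  destruct (MVT_gen f s t df) as [c [hc e]].
  - intros x _. apply is_derive_Reals; auto.
  - intros x _. eapply D_cont; eauto.
  - assert (df c * (t - s) <= 0) by (assert (df c <= 0) by auto; nra). lra.
Qed.

Lemma D_const_fun f df : (forall t, derivable_pt_lim f t (df t)) -> (forall t, df t = 0) ->
  forall s t, f t = f s.
Proof.
  intros hd hz s t.
  destruct (MVT_gen f s t df) as [c [hc e]].
  - intros x _. apply is_derive_Reals; auto.
  - intros x _. eapply D_cont; eauto.
  - rewrite hz in e. lra.
Qed.

Lemma gronwall0 u du K : (forall t, derivable_pt_lim u t (du t)) -> (forall t, 0 <= u t) ->
  0 <= K -> (forall t, Rabs (du t) <= K * u t) -> forall t0, u t0 = 0 -> forall t, u t = 0.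
Proof.
  intros hd hp hK hb t0 h0 t.
  destruct (Rle_dec t0 t) as [hle|hlt].
  - set (h := fun s => u s * exp (- K * s)).
    assert (hdh : forall s, derivable_pt_lim h s ((du s - K * u s) * exp (- K * s))).
    { intro s. unfold h. eapply D_val.
      - apply D_mult; [apply hd|]. apply (D_comp exp (fun s => -K * s) s (exp (-K*s)) (-K)). apply D_exp.
        eapply D_val. apply D_mult; [apply D_const|apply D_id]. cbv beta; ring.
      - cbv beta; ring. }
    assert (hn : forall s, (du s - K * u s) * exp (- K * s) <= 0).
    { intro s. assert (0 < exp (-K*s)) by apply exp_pos. assert (hh := absle _ _ (hb s)). nra. }
    assert (e := D_nonincr h _ hdh hn t0 t hle). unfold h in e. rewrite h0 in e.
    assert (0 < exp (-K*t)) by apply exp_pos. assert (hu := hp t). nra.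
  - set (h := fun s => u s * exp (K * s)).
    assert (hdh : forall s, derivable_pt_lim h s ((du s + K * u s) * exp (K * s))).
    { intro s. unfold h. eapply D_val.
      - apply D_mult; [apply hd|]. apply (D_comp exp (fun s => K * s) s (exp (K*s)) K). apply D_exp.
        eapply D_val. apply D_mult; [apply D_const|apply D_id]. cbv beta; ring.
      - cbv beta; ring. }
    assert (hn : forall s, 0 <= (du s + K * u s) * exp (K * s)).
    { intro s. assert (0 < exp (K*s)) by apply exp_pos. assert (hh := absle _ _ (hb s)). nra. }
    assert (hdh' : forall s, derivable_pt_lim (fun s => - h s) s (- ((du s + K * u s) * exp (K * s)))).
    { intro s. apply (D_ext (fun t => 0 - h t)). intro; ring. eapply D_val. apply (D_minus (fun _ => 0) h). apply D_const. apply hdh. cbv beta; ring. }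
    assert (e := D_nonincr (fun s => - h s) _ hdh' ltac:(intro s; specialize (hn s); lra) t t0 ltac:(lra)).
    unfold h in e. rewrite h0 in e.
    assert (0 < exp (K*t)) by apply exp_pos. assert (hu := hp t). nra.
Qed.

Lemma pos_stay f : (forall t, continuity_pt f t) -> 0 < f 0 -> (forall t, f t <> 0) -> forall t, 0 < f t.
Proof.
  intros hc h0 hn t. destruct (Rlt_dec 0 (f t)) as [h|h]; auto. exfalso.
  destruct (IVT_gen f 0 t 0 hc) as [x [_ hx]].
  - unfold Rmin, Rmax; destruct (Rle_dec (f 0) (f t)); lra.
  - exact (hn x hx).
Qed.

Definition Fsol (phi : R -> nat -> R) : Prop :=
  forall t i, (i < 3)%nat -> derivable_pt_lim (fun s => phi s i) t (Fp (phi t) i).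

Lemma Fsol_sum phi : Fsol phi -> forall t,
  phi t 0%nat + phi t 1%nat + phi t 2%nat = phi 0 0%nat + phi 0 1%nat + phi 0 2%nat.
Proof.
  intros hs t.
  apply (D_const_fun (fun t => phi t 0%nat + phi t 1%nat + phi t 2%nat) (fun _ => 0)).
  - intro s. eapply D_val. apply D_plus; [apply D_plus|]; apply hs; lia.
    apply Fp_sum.
  - auto.
Qed.

Lemma Fsol_prod phi : Fsol phi -> forall t,
  phi t 0%nat * phi t 1%nat * phi t 2%nat = phi 0 0%nat * phi 0 1%nat * phi 0 2%nat.
Proof.
  intros hs t.
  apply (D_const_fun (fun t => phi t 0%nat * phi t 1%nat * phi t 2%nat) (fun _ => 0)).
  - intro s. eapply D_val. apply D_mult; [apply D_mult|]; apply hs; lia.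
    rewrite <- (Fp_prod (phi s)). ring.
  - auto.
Qed.

Lemma Fsol_interior phi : Fsol phi -> in_interior3 (phi 0) -> forall t, in_interior3 (phi t).
Proof.
  intros hs [h0 [h1 [h2 h3]]] t.
  assert (hp := Fsol_prod phi hs). assert (hsum := Fsol_sum phi hs).
  assert (c0 : 0 < phi 0 0%nat * phi 0 1%nat * phi 0 2%nat).
  { apply Rmult_lt_0_compat; auto. apply Rmult_lt_0_compat; auto. }
  assert (nz : forall i, (i < 3)%nat -> forall t, phi t i <> 0).
  { intros i hi s e. specialize (hp s).
    destruct i as [|[|[|i]]]; [| | | lia]; rewrite e in hp; lra. }
  assert (P : forall i, (i < 3)%nat -> 0 < phi 0 i -> forall t, 0 < phi t i).
  { intros i hi hpos. apply (pos_stay (fun t => phi t i)); auto.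
    intro s. eapply D_cont. apply hs; auto. }
  unfold in_interior3. split; [|split; [|split]].
  - apply P; auto; lia.
  - apply P; auto; lia.
  - apply P; auto; lia.
  - rewrite hsum. auto.
Qed.

Lemma interior_box x : in_interior3 x -> box x.
Proof. intros [h0 [h1 [h2 h3]]]. unfold box. lra. Qed.

Lemma Nd_sq u v : (Nd u v)^2 <= 3 * ((u 0%nat - v 0%nat)^2 + (u 1%nat - v 1%nat)^2 + (u 2%nat - v 2%nat)^2).
Proof.
  unfold Nd. rewrite <- (pow2_abs (u 0%nat - v 0%nat)), <- (pow2_abs (u 1%nat - v 1%nat)),
    <- (pow2_abs (u 2%nat - v 2%nat)).
  set (a := Rabs _). set (b := Rabs _). set (c := Rabs _).
  assert (H1 := pow2_ge_0 (a - b)). assert (H2 := pow2_ge_0 (b - c)). assert (H3 := pow2_ge_0 (a - c)).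
  nra.
Qed.

Lemma Fsol_unique phi psi : Fsol phi -> Fsol psi -> (forall t, box (phi t)) -> (forall t, box (psi t)) ->
  forall t0, (forall i, (i < 3)%nat -> phi t0 i = psi t0 i) ->
  forall t i, (i < 3)%nat -> phi t i = psi t i.
Proof.
  intros h1 h2 b1 b2 t0 he t i hi.
  set (d := fun t i => phi t i - psi t i).
  set (u := fun t => d t 0%nat ^ 2 + d t 1%nat ^ 2 + d t 2%nat ^ 2).
  set (du := fun t => 2 * (d t 0%nat * (Fp (phi t) 0%nat - Fp (psi t) 0%nat)
      + d t 1%nat * (Fp (phi t) 1%nat - Fp (psi t) 1%nat) + d t 2%nat * (Fp (phi t) 2%nat - Fp (psi t) 2%nat))).
  assert (Dd : forall t i, (i < 3)%nat -> derivable_pt_lim (fun s => d s i) t (Fp (phi t) i - Fp (psi t) i)).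
  { intros s j hj. unfold d. apply D_minus; [apply h1|apply h2]; auto. }
  assert (Du : forall t, derivable_pt_lim u t (du t)).
  { intro s. unfold u, du. eapply D_val.
    apply D_plus; [apply D_plus|]; (apply (D_comp (fun y => y ^ 2)); [apply (D_ext (fun y => y * y)); [intro; ring|]; apply D_mult; apply D_id | apply Dd; lia]).
    simpl. ring. }
  assert (Bd : forall s, Rabs (du s) <= 120 * u s).
  { intro s. assert (L0 := absle _ _ (Fp_lip (phi s) (psi s) 0%nat (b1 s) (b2 s))).
    assert (L1 := absle _ _ (Fp_lip (phi s) (psi s) 1%nat (b1 s) (b2 s))).
    assert (L2 := absle _ _ (Fp_lip (phi s) (psi s) 2%nat (b1 s) (b2 s))).
    assert (NS := Nd_sq (phi s) (psi s)).
    unfold du, u, d. unfold Nd in *.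
    set (A0 := phi s 0%nat - psi s 0%nat) in *. set (A1 := phi s 1%nat - psi s 1%nat) in *.
    set (A2 := phi s 2%nat - psi s 2%nat) in *.
    set (E0 := Fp (phi s) 0 - Fp (psi s) 0) in *. set (E1 := Fp (phi s) 1 - Fp (psi s) 1) in *.
    set (E2 := Fp (phi s) 2 - Fp (psi s) 2) in *.
    assert (G : forall a e N, -N <= e <= N -> Rabs (a * e) <= Rabs a * N).
    { intros a e N he'. rewrite Rabs_mult. apply Rmult_le_compat_l. apply Rabs_pos. apply leabs. lra. }
    set (N := Rabs A0 + Rabs A1 + Rabs A2) in *.
    assert (g0 := absle _ _ (G A0 E0 (20 * N) L0)). assert (g1 := absle _ _ (G A1 E1 (20 * N) L1)).
    assert (g2 := absle _ _ (G A2 E2 (20 * N) L2)).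
    apply leabs. unfold N in *. nra. }
  assert (Z := gronwall0 u du 120 Du ltac:(intro s; unfold u; assert (H1 := pow2_ge_0 (d s 0%nat));
      assert (H2 := pow2_ge_0 (d s 1%nat)); assert (H3 := pow2_ge_0 (d s 2%nat)); lra) ltac:(lra) Bd).
  assert (Zu : u t = 0).
  { apply (Z t0). unfold u, d. rewrite !he by lia. ring. }
  unfold u in Zu. assert (H1 := pow2_ge_0 (d t 0%nat)); assert (H2 := pow2_ge_0 (d t 1%nat)); assert (H3 := pow2_ge_0 (d t 2%nat)).
  assert (d t i = 0).
  { destruct i as [|[|[|i]]]; [| | | lia]; simpl in *; nra. }
  unfold d in H. lra.
Qed.

Lemma lip_cont (g : R -> R) C : 0 <= C -> (forall s s', Rabs (g s - g s') <= C * Rabs (s - s')) ->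
  forall t, continuous g t.
Proof.
  intros hC hl t. apply continuity_pt_filterlim.
  intros eps he. exists (eps / (C + 1)). split.
  - apply Rdiv_lt_0_compat; lra.
  - intros x [_ hx]. simpl in *. unfold R_dist in *.
    eapply Rle_lt_trans; [apply hl|].
    assert (0 <= Rabs (x - t)) by apply Rabs_pos.
    assert (Rabs (x - t) * (C + 1) < eps).
    { apply (Rmult_lt_compat_r (C+1)) in hx; [|lra]. unfold Rdiv in hx.
      rewrite Rmult_assoc, Rinv_l, Rmult_1_r in hx by lra. auto. }
    nra.
Qed.

Lemma ex_RInt_cont (g : R -> R) a b : (forall s, continuous g s) -> ex_RInt g a b.
Proof. intro h. apply (@ex_RInt_continuous R_CompleteNormedModule). intros; auto. Qed.

Lemma RInt_correctR (g:R->R) a b : ex_RInt g a b -> is_RInt g a b (RInt g a b).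
Proof. exact (@RInt_correct R_CompleteNormedModule g a b). Qed.

Lemma RInt_abs_bound (g h : R -> R) a b : a <= b -> (forall s, continuous g s) -> (forall s, continuous h s) ->
  (forall s, a <= s <= b -> Rabs (g s) <= h s) -> Rabs (RInt g a b) <= RInt h a b.
Proof.
  intros hab hg hh hb.
  apply (norm_RInt_le g h a b (RInt g a b) (RInt h a b) hab hb);
   apply RInt_correctR; apply ex_RInt_cont; auto.
Qed.

Lemma cont_const (c : R) s : continuous (fun _ : R => c) s.
Proof. apply continuous_const. Qed.

Lemma RInt_const_bound (g : R -> R) M a b : (forall s, continuous g s) ->
  (forall s, Rmin a b <= s <= Rmax a b -> Rabs (g s) <= M) -> Rabs (RInt g a b) <= M * Rabs (b - a).
Proof.
  intros hg hb. destruct (Rle_dec a b) as [hab|hab].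
  - rewrite Rmin_left, Rmax_right in hb by lra.
    eapply Rle_trans; [apply (RInt_abs_bound g (fun _ => M)); auto; intro; apply cont_const|].
    rewrite RInt_const. rewrite Rabs_right by lra. simpl. change (scal (b - a) M) with ((b-a) * M). lra.
  - rewrite Rmin_right, Rmax_left in hb by lra.
    rewrite <- (opp_RInt_swap g b a) by (apply ex_RInt_cont; auto).
    change (opp (RInt g b a)) with (- RInt g b a). rewrite Rabs_Ropp.
    eapply Rle_trans; [apply (RInt_abs_bound g (fun _ => M)); auto; try lra; intro; apply cont_const|].
    rewrite RInt_const. rewrite Rabs_left by lra. change (scal (a - b) M) with ((a-b) * M). lra.
Qed.

Lemma cont_pow C k s : continuous (fun s => C * s ^ k) s.
Proof.
  apply (D_continuous _ _ (0 * s ^ k + C * (INR k * s ^ pred k))).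
  apply D_mult; [apply D_const|apply derivable_pt_lim_pow].
Qed.
Lemma cont_powm C k s : continuous (fun s => C * (- s) ^ k) s.
Proof.
  apply (D_continuous _ _ (0 * (-s) ^ k + C * (-1 * (INR k * (- s) ^ pred k)))).
  apply D_mult; [apply D_const|]. apply (D_comp (fun y => y ^ k) (fun s => - s)).
  apply derivable_pt_lim_pow. apply (D_ext (fun s => 0 - s)); [intro; ring|].
  eapply D_val. apply D_minus; [apply D_const|apply D_id]. ring.
Qed.

Lemma RInt_pow_bound (g : R -> R) C k t : (forall s, continuous g s) ->
  (forall s, Rabs (g s) <= C * Rabs s ^ k) -> Rabs (RInt g 0 t) <= C * Rabs t ^ (S k) / INR (S k).
Proof.
  intros hg hb. assert (hk : 0 < INR (S k)) by (apply lt_0_INR; lia).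
  destruct (Rle_dec 0 t) as [ht|ht].
  - eapply Rle_trans.
    { apply (RInt_abs_bound g (fun s => C * s ^ k)); [lra|auto|intro; apply cont_pow|].
      intros s hs. specialize (hb s). rewrite (Rabs_right s) in hb by lra. auto. }
    assert (E : is_RInt (fun s => C * s ^ k) 0 t (minus (C * t ^ S k / INR (S k)) (C * 0 ^ S k / INR (S k)))).
    { apply (is_RInt_derive (fun s => C * s ^ S k / INR (S k))).
      - intros x _. apply is_derive_Reals.
        apply (D_val _ _ ((0 * x ^ S k + C * (INR (S k) * x ^ pred (S k))) / INR (S k))).
        + apply (D_ext (fun s => (C * s ^ S k) * / INR (S k))); [intro; reflexivity|].
          apply (D_ext (fun s => (C * s ^ S k) * (fun _ => / INR (S k)) s)); [intro; reflexivity|].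
          eapply D_val. apply D_mult; [apply D_mult; [apply D_const|apply derivable_pt_lim_pow]|apply D_const].
          cbv beta. unfold Rdiv. ring.
        + simpl pred. field. lra.
      - intros; apply cont_pow. }
    rewrite (is_RInt_unique _ _ _ _ E). rewrite Rabs_right by lra.
    change (minus ?a ?b) with (a - b). simpl pow at 2. unfold Rdiv. rewrite Rmult_0_l, Rmult_0_r, Rmult_0_l. lra.
  - rewrite <- (opp_RInt_swap g t 0) by (apply ex_RInt_cont; auto).
    change (opp (RInt g t 0)) with (- RInt g t 0). rewrite Rabs_Ropp.
    eapply Rle_trans.
    { apply (RInt_abs_bound g (fun s => C * (- s) ^ k)); [lra|auto|intro; apply cont_powm|].
      intros s hs. specialize (hb s). rewrite (Rabs_left1 s) in hb by lra. auto. }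
    assert (E : is_RInt (fun s => C * (- s) ^ k) t 0
       (minus (- (C * (- 0) ^ S k / INR (S k))) (- (C * (- t) ^ S k / INR (S k))))).
    { apply (is_RInt_derive (fun s => - (C * (- s) ^ S k / INR (S k)))).
      - intros x _. apply is_derive_Reals.
        apply (D_val _ _ (0 - (0 * (- x) ^ S k + C * (-1 * (INR (S k) * (- x) ^ pred (S k)))) * / INR (S k))).
        + apply (D_ext (fun s => 0 - (C * (- s) ^ S k) * (fun _ => / INR (S k)) s)); [intro; cbv beta; unfold Rdiv; ring|].
          eapply D_val. apply D_minus; [apply D_const|].
          apply D_mult; [|apply D_const]. apply D_mult; [apply D_const|].
          apply (D_comp (fun y => y ^ S k) (fun s => - s) x (INR (S k) * (- x) ^ pred (S k)) (-1)). apply derivable_pt_lim_pow.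
          apply (D_ext (fun s => 0 - s)); [intro; ring|].
          eapply D_val. apply D_minus; [apply D_const|apply D_id]. ring.
          cbv beta. ring.
        + simpl pred. field. lra.
      - intros; apply cont_powm. }
    rewrite (is_RInt_unique _ _ _ _ E). rewrite Rabs_left by lra.
    change (minus ?a ?b) with (a - b). rewrite Ropp_0. simpl pow at 1. unfold Rdiv. rewrite Rmult_0_l, Rmult_0_r, Rmult_0_l. lra.
Qed.

Lemma RInt_deriv (g : R -> R) : (forall s, continuous g s) -> forall t, derivable_pt_lim (fun t => RInt g 0 t) t (g t).
Proof.
  intros hg t. apply is_derive_Reals. apply (is_derive_RInt g (fun t => RInt g 0 t) 0 t).
  - apply filter_forall. intro. apply RInt_correctR. apply ex_RInt_cont; auto.
  - auto.
Qed.

Definition RI (f : R -> R) (a b : R) : R := RInt f a b.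
Ltac foldRI := repeat match goal with |- context [RInt ?f ?a ?b] => change (RInt f a b) with (RI f a b) end.

Lemma addK (a r : R) : a + r - a = r.
Proof. ring. Qed.

Definition clamp (r : R) : R := Rmin 1 (Rmax 0 r).
Definition clampv (x : nat -> R) (i : nat) : R := clamp (x i).

Lemma clamp_box r : 0 <= clamp r <= 1.
Proof. unfold clamp, Rmin, Rmax. repeat destruct Rle_dec; lra. Qed.
Lemma clamp_id r : 0 <= r <= 1 -> clamp r = r.
Proof. intro h. unfold clamp, Rmin, Rmax. repeat destruct Rle_dec; lra. Qed.
Lemma clamp_lip u v : Rabs (clamp u - clamp v) <= Rabs (u - v).
Proof.
  unfold clamp, Rmin, Rmax. apply leabs.
  assert (h := Rle_abs (u - v)). assert (h' := Rle_abs (-(u - v))). rewrite Rabs_Ropp in h'.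
  repeat destruct Rle_dec; lra.
Qed.
Lemma clamp_mul r : Rabs (r * clamp r) <= r ^ 2.
Proof.
  unfold clamp, Rmin, Rmax. apply leabs.
  repeat destruct Rle_dec; nra.
Qed.

Lemma clampv_box x : box (clampv x).
Proof. unfold box, clampv. repeat split; apply clamp_box. Qed.
Lemma clampv_Nd u v : Nd (clampv u) (clampv v) <= Nd u v.
Proof.
  unfold Nd, clampv. assert (h0 := clamp_lip (u 0%nat) (v 0%nat)).
  assert (h1 := clamp_lip (u 1%nat) (v 1%nat)). assert (h2 := clamp_lip (u 2%nat) (v 2%nat)). lra.
Qed.

Definition ff (x : nat -> R) (i : nat) : R := Fp (clampv x) i.

Lemma ff_bound x i : Rabs (ff x i) <= 6.
Proof. apply Fp_bound, clampv_box. Qed.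
Lemma ff_lip u v i : Rabs (ff u i - ff v i) <= 20 * Nd u v.
Proof.
  unfold ff. eapply Rle_trans. apply Fp_lip; apply clampv_box.
  assert (h := clampv_Nd u v). lra.
Qed.

Lemma Nd_pos u v : 0 <= Nd u v.
Proof.
  unfold Nd. assert (H1 := Rabs_pos (u 0%nat - v 0%nat)).
  assert (H2 := Rabs_pos (u 1%nat - v 1%nat)). assert (H3 := Rabs_pos (u 2%nat - v 2%nat)). lra.
Qed.

Lemma g_cont (Y : R -> nat -> R) : (forall t s i, (i < 3)%nat -> Rabs (Y t i - Y s i) <= 6 * Rabs (t - s)) ->
  forall i s, continuous (fun s => ff (Y s) i) s.
Proof.
  intros hY i. apply (lip_cont _ (20 * 18)). lra.
  intros s s'. eapply Rle_trans. apply ff_lip. unfold Nd.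
  assert (h0 := hY s s' 0%nat ltac:(lia)). assert (h1 := hY s s' 1%nat ltac:(lia)).
  assert (h2 := hY s s' 2%nat ltac:(lia)). lra.
Qed.

Section Picard.
Variable x0 : nat -> R.

Fixpoint X (n : nat) (t : R) (i : nat) : R :=
  match n with
  | O => x0 i
  | S n => x0 i + RInt (fun s => ff (X n s) i) 0 t
  end.

Lemma X_lip n : forall t s i, Rabs (X n t i - X n s i) <= 6 * Rabs (t - s).
Proof.
  induction n as [|n IH]; intros t s i.
  - simpl. rewrite Rminus_diag_eq, Rabs_R0 by auto. assert (H := Rabs_pos (t - s)). lra.
  - simpl. assert (hc := g_cont (X n) ltac:(intros; apply IH) i).
    replace (x0 i + RInt (fun s0 : R => ff (X n s0) i) 0 t - (x0 i + RInt (fun s0 : R => ff (X n s0) i) 0 s))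
      with (RInt (fun s0 : R => ff (X n s0) i) s t).
    + apply RInt_const_bound; auto. intros; apply ff_bound.
    + assert (E : RInt (fun s0 : R => ff (X n s0) i) 0 s + RInt (fun s0 : R => ff (X n s0) i) s t
                = RInt (fun s0 : R => ff (X n s0) i) 0 t).
      { exact (RInt_Chasles (V:=R_CompleteNormedModule) (fun s0 : R => ff (X n s0) i) 0 s t
          (ex_RInt_cont _ _ _ hc) (ex_RInt_cont _ _ _ hc)). }
      lra.
Qed.

Lemma X_cont n i s : continuous (fun s => ff (X n s) i) s.
Proof. apply g_cont. intros; apply X_lip. Qed.

Definition bb (n : nat) (tau : R) : R := 6 * 60 ^ n * tau ^ (S n) / INR (Factorial.fact (S n)).

Lemma X_diff n : forall t i, (i < 3)%nat -> Rabs (X (S n) t i - X n t i) <= bb n (Rabs t).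
Proof.
  induction n as [|n IH]; intros t i hi.
  - simpl X. unfold bb. rewrite addK.
    eapply Rle_trans. apply RInt_const_bound. intro; apply cont_const. intros; apply ff_bound.
    simpl. rewrite Rminus_0_r. lra.
  - change (X (S (S n)) t i) with (x0 i + RInt (fun s => ff (X (S n) s) i) 0 t).
    change (X (S n) t i) with (x0 i + RInt (fun s => ff (X n s) i) 0 t).
    replace (x0 i + RInt (fun s => ff (X (S n) s) i) 0 t - (x0 i + RInt (fun s => ff (X n s) i) 0 t))
      with (RInt (fun s => ff (X (S n) s) i - ff (X n s) i) 0 t).
    2: { assert (E : RInt (fun s => ff (X (S n) s) i - ff (X n s) i) 0 t =
               RInt (fun s => ff (X (S n) s) i) 0 t - RInt (fun s => ff (X n s) i) 0 t).
         { exact (RInt_minus (V:=R_CompleteNormedModule) (fun s => ff (X (S n) s) i) (fun s => ff (X n s) i) 0 t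
             (ex_RInt_cont _ _ _ (X_cont _ _)) (ex_RInt_cont _ _ _ (X_cont _ _))). }
         lra. }
    eapply Rle_trans. apply (RInt_pow_bound _ (6 * 60 ^ (S n) / INR (Factorial.fact (S n))) (S n)).
    + intro s. apply (continuous_minus (V:=R_NormedModule)); apply X_cont.
    + intro s. eapply Rle_trans. apply ff_lip.
      assert (h0 := IH s 0%nat ltac:(lia)). assert (h1 := IH s 1%nat ltac:(lia)).
      assert (h2 := IH s 2%nat ltac:(lia)). unfold Nd, bb in *.
      unfold Rdiv. replace (60 ^ S n) with (60 * 60 ^ n) by (simpl; ring). lra.
    + unfold bb. change (Factorial.fact (S (S n))) with (S (S n) * Factorial.fact (S n))%nat. rewrite mult_INR.
      assert (0 < INR (Factorial.fact (S n))) by (apply lt_0_INR, Factorial.lt_O_fact).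
      assert (0 < INR (S (S n))) by (apply lt_0_INR; lia).
      right. field. lra.
Qed.

Lemma ex_series_leR (a b : nat -> R) : (forall n, Rabs (a n) <= b n) -> ex_series b -> ex_series a.
Proof. exact (@ex_series_le R_AbsRing R_CompleteNormedModule a b). Qed.

Lemma bb_nonneg n tau : 0 <= tau -> 0 <= bb n tau.
Proof.
  intro h. unfold bb. assert (0 < INR (Factorial.fact (S n))) by (apply lt_0_INR, Factorial.lt_O_fact).
  assert (0 <= 60 ^ n) by (apply pow_le; lra). assert (0 <= tau ^ S n) by (apply pow_le; lra).
  apply Rmult_le_pos; [|left; apply Rinv_0_lt_compat; auto]. apply Rmult_le_pos; auto. lra.
Qed.

Lemma bb_mono n s t : 0 <= s <= t -> bb n s <= bb n t.
Proof.
  intro h. unfold bb. assert (0 < INR (Factorial.fact (S n))) by (apply lt_0_INR, Factorial.lt_O_fact).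
  assert (0 <= 60 ^ n) by (apply pow_le; lra). assert (s ^ S n <= t ^ S n) by (apply pow_incr; lra).
  unfold Rdiv. apply Rmult_le_compat_r; [left; apply Rinv_0_lt_compat; auto|]. nra.
Qed.

Lemma bb_series tau : ex_series (fun n => bb n tau).
Proof.
  assert (ex : ex_series (fun k => scal (pow_n (60 * tau) k) (/ INR (Factorial.fact k)))) by
    (eexists; apply is_exp_Reals).
  apply ex_series_incr_1 in ex. apply (ex_series_scal_l (6/60)) in ex.
  assert (E : forall n, 6/60 * ((60 * tau) ^ (S n) * / INR (Factorial.fact (S n))) = bb n tau).
  { intro n. unfold bb. rewrite Rpow_mult_distr.
    replace (60 ^ S n) with (60 * 60 ^ n) by (simpl; ring).
    assert (0 < INR (Factorial.fact (S n))) by (apply lt_0_INR, Factorial.lt_O_fact).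
    field. lra. }
  revert ex. apply ex_series_ext. intro n. rewrite pow_n_pow. exact (E n).
Qed.

Lemma a_series t i : (i < 3)%nat -> ex_series (fun n => X (S n) t i - X n t i).
Proof.
  intro hi. apply (ex_series_leR _ (fun n => bb n (Rabs t))); [|apply bb_series].
  intro n. exact (X_diff n t i hi).
Qed.

Definition xs (t : R) (i : nat) : R := x0 i + Series (fun n => X (S n) t i - X n t i).

Lemma partial t i n : sum_f_R0 (fun n => X (S n) t i - X n t i) n = X (S n) t i - x0 i.
Proof.
  induction n as [|n IH]; [reflexivity|]. rewrite tech5, IH. ring.
Qed.

Definition EE (n : nat) (tau : R) : R := Series (fun k => bb (S n + k) tau).

Lemma tail t i n : (i < 3)%nat -> Rabs (xs t i - X (S n) t i) <= EE n (Rabs t).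
Proof.
  intro hi. unfold xs, EE.
  rewrite (Series_incr_n _ (S n)) by (lia || apply a_series; auto).
  simpl pred. rewrite partial.
  replace (x0 i + (X (S n) t i - x0 i + Series (fun k => X (S (S n + k)) t i - X (S n + k) t i)) - X (S n) t i)
    with (Series (fun k => X (S (S n + k)) t i - X (S n + k) t i)) by ring.
  assert (exb : ex_series (fun k => bb (S n + k) (Rabs t))) by (apply (ex_series_incr_n (fun k => bb k (Rabs t))), bb_series).
  eapply Rle_trans. apply Series_Rabs.
  { apply (ex_series_leR _ (fun k => bb (S n + k) (Rabs t))); auto.
    intro k. rewrite Rabs_Rabsolu. apply X_diff; auto. }
  apply Series_le; auto. intro k. split; [apply Rabs_pos|]. apply X_diff; auto.
Qed.

Lemma EE_lim tau : is_lim_seq (fun n => EE n tau) 0.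
Proof.
  assert (H := Series_correct _ (bb_series tau)).
  assert (H2 : is_lim_seq (fun n => sum_f_R0 (fun k => bb k tau) n) (Series (fun k => bb k tau))).
  { apply (is_lim_seq_ext (sum_n (fun k => bb k tau))). intro; apply sum_n_Reals. exact H. }
  assert (H3 := is_lim_seq_minus' _ _ _ _ (is_lim_seq_const (Series (fun k => bb k tau))) H2).
  rewrite Rminus_diag_eq in H3 by auto. revert H3. apply is_lim_seq_ext.
  intro n. unfold EE. rewrite (Series_incr_n (fun k => bb k tau) (S n)) by (lia || apply bb_series).
  simpl pred. ring.
Qed.

Lemma EE_mono n s t : 0 <= s <= t -> EE n s <= EE n t.
Proof.
  intro h. unfold EE. apply Series_le; [|apply (ex_series_incr_n (fun k => bb k t)), bb_series].
  intro k. split; [apply bb_nonneg; lra|apply bb_mono; auto].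
Qed.

Lemma EE_nonneg n t : 0 <= t -> 0 <= EE n t.
Proof.
  intro h. unfold EE. assert (ex : ex_series (fun k => bb (S n + k) t)) by (apply (ex_series_incr_n (fun k => bb k t)), bb_series).
  assert (E := Series_scal_l 0 (fun k => bb (S n + k) t)). rewrite Rmult_0_l in E.
  rewrite <- E. apply Series_le; auto. intro k. split; [lra|]. rewrite Rmult_0_l. apply bb_nonneg; auto.
Qed.
End Picard.

Lemma le_lim A B e : (forall n, A <= B + e n) -> is_lim_seq e 0 -> A <= B.
Proof.
  intros h he. assert (H := is_lim_seq_le (fun _ => A) (fun n => B + e n) A (B + 0) h
    (is_lim_seq_const A) (is_lim_seq_plus' _ _ B 0 (is_lim_seq_const B) he)).
  simpl in H. lra.
Qed.

Section Picard2.
Variable x0 : nat -> R.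

Lemma xs_lip t s i : (i < 3)%nat -> Rabs (xs x0 t i - xs x0 s i) <= 6 * Rabs (t - s).
Proof.
  intro hi. apply (le_lim _ _ (fun n => EE n (Rabs t) + EE n (Rabs s))).
  - intro n. assert (h1 := tail x0 t i n hi). assert (h2 := tail x0 s i n hi).
    assert (h3 := X_lip x0 (S n) t s i).
    apply leabs. apply absle in h1. apply absle in h2. apply absle in h3. lra.
  - replace 0 with (0 + 0) by ring. apply is_lim_seq_plus'; apply EE_lim.
Qed.

Lemma xs_cont i s : continuous (fun s => ff (xs x0 s) i) s.
Proof. apply g_cont. intros; apply xs_lip; auto. Qed.

Lemma xs_int t i : (i < 3)%nat -> xs x0 t i = x0 i + RInt (fun s => ff (xs x0 s) i) 0 t.
Proof.
  intro hi.
  assert (L : Rabs (xs x0 t i - (x0 i + RInt (fun s => ff (xs x0 s) i) 0 t)) <= 0).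
  { apply (le_lim _ _ (fun n => EE (S n) (Rabs t) + 60 * EE n (Rabs t) * Rabs t)).
    - intro n. rewrite Rplus_0_l.
      assert (h1 := tail x0 t i (S n) hi).
      assert (h2 : Rabs (RInt (fun s => ff (X x0 (S n) s) i - ff (xs x0 s) i) 0 t) <= 60 * EE n (Rabs t) * Rabs (t - 0)).
      { apply RInt_const_bound.
        - intro s. apply (continuous_minus (V:=R_NormedModule)); [apply X_cont|apply xs_cont].
        - intros s hs. eapply Rle_trans. apply ff_lip.
          assert (hs' : Rabs s <= Rabs t).
          { unfold Rmin, Rmax in hs. destruct (Rle_dec 0 t); unfold Rabs; repeat destruct Rcase_abs; lra. }
          assert (m := EE_mono n (Rabs s) (Rabs t) (conj (Rabs_pos s) hs')).
          assert (e0 := tail x0 s 0%nat n ltac:(lia)). assert (e1 := tail x0 s 1%nat n ltac:(lia)).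
          assert (e2 := tail x0 s 2%nat n ltac:(lia)).
          rewrite (Rabs_minus_sym (xs x0 s 0%nat)) in e0.
          rewrite (Rabs_minus_sym (xs x0 s 1%nat)) in e1.
          rewrite (Rabs_minus_sym (xs x0 s 2%nat)) in e2.
          unfold Nd. lra. }
      assert (E : RInt (fun s => ff (X x0 (S n) s) i - ff (xs x0 s) i) 0 t =
               RInt (fun s => ff (X x0 (S n) s) i) 0 t - RInt (fun s => ff (xs x0 s) i) 0 t).
      { exact (RInt_minus (V:=R_CompleteNormedModule) (fun s => ff (X x0 (S n) s) i) (fun s => ff (xs x0 s) i) 0 t
             (ex_RInt_cont _ _ _ (X_cont _ _ _)) (ex_RInt_cont _ _ _ (xs_cont _))). }
      rewrite E in h2. rewrite Rminus_0_r in h2.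
      change (X x0 (S (S n)) t i) with (x0 i + RInt (fun s => ff (X x0 (S n) s) i) 0 t) in h1.
      apply leabs. apply absle in h1. apply absle in h2. lra.
    - replace 0 with (0 + 60 * 0 * Rabs t) by ring. apply is_lim_seq_plus'.
      + apply (is_lim_seq_incr_1 (fun n => EE n (Rabs t))). apply EE_lim.
      + apply is_lim_seq_mult'; [|apply is_lim_seq_const].
        assert (H := is_lim_seq_scal_l _ 60 _ (EE_lim (Rabs t))). simpl in H. exact H. }
  assert (h := Rabs_pos (xs x0 t i - (x0 i + RInt (fun s => ff (xs x0 s) i) 0 t))).
  assert (Z : Rabs (xs x0 t i - (x0 i + RInt (fun s => ff (xs x0 s) i) 0 t)) = 0) by lra.
  apply Rabs_eq_0 in Z. lra.
Qed.

Lemma xs_deriv t i : (i < 3)%nat -> derivable_pt_lim (fun s => xs x0 s i) t (ff (xs x0 t) i).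
Proof.
  intro hi. apply (D_ext (fun s => x0 i + RInt (fun s => ff (xs x0 s) i) 0 s)).
  - intro s. symmetry. apply xs_int; auto.
  - eapply D_val. apply D_plus. apply D_const. apply RInt_deriv. intro; apply xs_cont. ring.
Qed.

Lemma xs_init i : (i < 3)%nat -> xs x0 0 i = x0 i.
Proof. intro hi. rewrite xs_int by auto. rewrite RInt_point. change (x0 i + 0 = x0 i). ring. Qed.
End Picard2.

Lemma Fp_ext x y : (forall i, (i < 3)%nat -> x i = y i) -> forall j, Fp x j = Fp y j.
Proof.
  intros h j. unfold Fp, Qf. rewrite !h by lia. reflexivity.
Qed.

Lemma ff_mul x i : (i < 3)%nat -> Rabs (x i * ff x i) <= 6 * (x i) ^ 2.
Proof.
  intro hi. unfold ff. assert (hb := clampv_box x). assert (hq := Qf_box _ hb).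
  destruct hb as [b0 [b1 b2]].
  assert (G : forall c d, Rabs c <= 1 -> Rabs (x i * (clampv x i * (c * d))) <= Rabs c * Rabs d * (x i)^2).
  { intros c d hc. rewrite <- Rmult_assoc, !Rabs_mult. unfold clampv. assert (hm := clamp_mul (x i)).
    rewrite Rabs_mult in hm. assert (0 <= Rabs c * Rabs d) by (apply Rmult_le_pos; apply Rabs_pos). nra. }
  assert (Fq : forall c, Rabs c <= 1 -> Rabs c * Rabs (Qf (clampv x)) <= 6).
  { intros c hc. rewrite (Rabs_right (Qf _)) by lra. assert (0 <= Rabs c) by apply Rabs_pos. nra. }
  assert (P : 0 <= (x i) ^ 2) by apply pow2_ge_0.
  destruct i as [|[|[|i]]]; [| | | lia]; unfold Fp.
  - rewrite Rmult_assoc. eapply Rle_trans. apply G. apply leabs; unfold clampv in *; lra.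
    apply Rmult_le_compat_r; auto. apply Fq. apply leabs; unfold clampv in *; lra.
  - rewrite Rmult_assoc. eapply Rle_trans. apply G. apply leabs; unfold clampv in *; lra.
    apply Rmult_le_compat_r; auto. apply Fq. apply leabs; unfold clampv in *; lra.
  - rewrite Rmult_assoc. eapply Rle_trans. apply G. apply leabs; unfold clampv in *; lra.
    apply Rmult_le_compat_r; auto. apply Fq. apply leabs; unfold clampv in *; lra.
Qed.

Lemma existence x0 : in_interior3 x0 -> Fsol (xs x0) /\ (forall i, (i < 3)%nat -> xs x0 0 i = x0 i).
Proof.
  intros hx. set (phi := xs x0).
  assert (init : forall i, (i < 3)%nat -> phi 0 i = x0 i) by (intros; apply xs_init; auto).
  assert (D : forall t i, (i < 3)%nat -> derivable_pt_lim (fun s => phi s i) t (ff (phi t) i))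
    by (intros; apply xs_deriv; auto).
  assert (pos0 : forall i, (i < 3)%nat -> 0 < x0 i).
  { destruct hx as [h0 [h1 [h2 _]]]. intros i hi; destruct i as [|[|[|i]]]; auto; lia. }
  assert (nz : forall i, (i < 3)%nat -> forall t, phi t i <> 0).
  { intros i hi t1 e.
    set (u := fun s => phi s i ^ 2). set (du := fun s => 2 * phi s i * ff (phi s) i).
    assert (Du : forall s, derivable_pt_lim u s (du s)).
    { intro s. unfold u, du. eapply D_val. apply (D_comp (fun y => y ^ 2)).
      apply derivable_pt_lim_pow. apply D; auto. simpl. ring. }
    assert (Z := gronwall0 u du 12 Du ltac:(intro; apply pow2_ge_0) ltac:(lra)
      ltac:(intro s; unfold du, u; rewrite Rmult_assoc, Rabs_mult, Rabs_right by lra;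
            assert (hm := ff_mul (phi s) i hi); lra) t1 ltac:(unfold u; rewrite e; ring) 0).
    unfold u in Z. rewrite init in Z by auto. assert (h := pos0 i hi). nra. }
  assert (pos : forall i, (i < 3)%nat -> forall t, 0 < phi t i).
  { intros i hi. apply pos_stay. intro s; eapply D_cont; apply D; auto.
    rewrite init; auto. apply nz; auto. }
  assert (sum : forall t, phi t 0%nat + phi t 1%nat + phi t 2%nat = 1).
  { intro t. destruct hx as [_ [_ [_ hs]]]. rewrite <- hs, <- !init by lia.
    apply (D_const_fun (fun t => phi t 0%nat + phi t 1%nat + phi t 2%nat) (fun _ => 0)).
    - intro s. eapply D_val. apply D_plus; [apply D_plus|]; apply D; lia.
      unfold ff. apply Fp_sum.
    - auto. }
  assert (eq : forall t j, ff (phi t) j = Fp (phi t) j).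
  { intros t j. unfold ff. apply Fp_ext. intros i hi. unfold clampv. apply clamp_id.
    assert (p0 := pos 0%nat ltac:(lia) t). assert (p1 := pos 1%nat ltac:(lia) t).
    assert (p2 := pos 2%nat ltac:(lia) t). assert (s := sum t).
    destruct i as [|[|[|i]]]; [| | | lia]; lra. }
  split; auto. intros t i hi. rewrite <- eq. apply D; auto.
Qed.

Lemma sq_pos a : a <> 0 -> 0 < a ^ 2.
Proof. intro h. replace (a^2) with (Rsqr a) by (unfold Rsqr; ring). apply Rsqr_pos_lt; auto. Qed.
Lemma amgm3 x y z : 0 < x -> 0 < y -> 0 < z -> x + y + z = 1 -> ~ (x = 1/3 /\ y = 1/3 /\ z = 1/3) ->
  3 * (x*y*z) - (x*y+y*z+z*x)/3 < 0.
Proof. intros hx hy hz hs hn.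
 assert (K : (x+y+z)*(x*y+y*z+z*x) - 9*(x*y*z) = x*(y-z)^2 + y*(z-x)^2 + z*(x-y)^2) by ring.
 rewrite hs in K.
 assert (A1 := pow2_ge_0 (y - z)). assert (A2 := pow2_ge_0 (z - x)). assert (A3 := pow2_ge_0 (x - y)).
 assert (B1 : 0 <= x*(y-z)^2) by (apply Rmult_le_pos; lra).
 assert (B2 : 0 <= y*(z-x)^2) by (apply Rmult_le_pos; lra).
 assert (B3 : 0 <= z*(x-y)^2) by (apply Rmult_le_pos; lra).
 assert (0 < x*(y-z)^2 + y*(z-x)^2 + z*(x-y)^2).
 { destruct (Req_dec x y).
   - destruct (Req_dec y z). exfalso; apply hn; lra.
     assert (0 < x * (y-z)^2) by (apply Rmult_lt_0_compat; [lra|apply sq_pos; lra]). lra.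
   - assert (0 < z * (x-y)^2) by (apply Rmult_lt_0_compat; [lra|apply sq_pos; lra]). lra. }
 lra. Qed.
Lemma same_point_R a b c a' b' c' : 0 < a -> 0 < b -> 0 < c -> a + b + c = 1 ->
  0 < a' -> 0 < b' -> 0 < c' -> a' + b' + c' = 1 -> a*b*c = a'*b'*c' ->
  ~ (a = 1/3 /\ b = 1/3 /\ c = 1/3) -> ~ (a' = 1/3 /\ b' = 1/3 /\ c' = 1/3) ->
  (3*a'-1)*(b-c) - (b'-c')*(3*a-1) = 0 -> 0 < (3*a'-1)*(3*a-1) + (b'-c')*(b-c) ->
  a' = a /\ b' = b /\ c' = c.
Proof.
  intros ha hb hc hs ha' hb' hc' hs' hp hn hn' hx hy.
  set (Dp := 3*a-1) in *. set (Np := b - c) in *. set (Dq := 3*a'-1) in *. set (Nq := b'-c') in *.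
  assert (hr : 0 < Dp^2 + Np^2).
  { destruct (Req_dec Dp 0).
    - destruct (Req_dec Np 0). exfalso; apply hn; unfold Dp, Np in *; lra.
      assert (H1 := sq_pos Np H0). assert (H2 := pow2_ge_0 Dp). lra.
    - assert (H1 := sq_pos Dp H). assert (H2 := pow2_ge_0 Np). lra. }
  set (l := (Dq*Dp + Nq*Np)/(Dp^2+Np^2)).
  assert (hl : 0 < l) by (unfold l; apply Rdiv_lt_0_compat; lra).
  assert (z : Dq*Np - Nq*Dp = 0) by (unfold Dq, Np, Nq, Dp in *; lra).
  assert (E1 : Dq * (Dp^2+Np^2) = (Dq*Dp + Nq*Np) * Dp).
  { replace (Dq * (Dp^2+Np^2)) with ((Dq*Dp+Nq*Np)*Dp + Np*(Dq*Np - Nq*Dp)) by ring. rewrite z. ring. }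
  assert (E2 : Nq * (Dp^2+Np^2) = (Dq*Dp + Nq*Np) * Np).
  { replace (Nq * (Dp^2+Np^2)) with ((Dq*Dp+Nq*Np)*Np - Dp*(Dq*Np - Nq*Dp)) by ring. rewrite z. ring. }
  assert (eD : Dq = l * Dp).
  { unfold l. replace ((Dq*Dp + Nq*Np)/(Dp^2+Np^2) * Dp) with (((Dq*Dp + Nq*Np) * Dp)/(Dp^2+Np^2)) by (field; lra).
    rewrite <- E1. field. lra. }
  assert (eN : Nq = l * Np).
  { unfold l. replace ((Dq*Dp + Nq*Np)/(Dp^2+Np^2) * Np) with (((Dq*Dp + Nq*Np) * Np)/(Dp^2+Np^2)) by (field; lra).
    rewrite <- E2. field. lra. }
  assert (ea : a' = 1/3 + l*(a - 1/3)) by (unfold Dq, Dp in eD; lra).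
  assert (S3 : l*a + l*b + l*c = l) by (replace (l*a+l*b+l*c) with (l*(a+b+c)) by ring; rewrite hs; ring).
  assert (eb : b' = 1/3 + l*(b - 1/3)) by (unfold Nq, Np in eN; unfold Dq, Dp in eD; lra).
  assert (ec : c' = 1/3 + l*(c - 1/3)) by (unfold Nq, Np in eN; unfold Dq, Dp in eD; lra).
  assert (H1 := amgm3 a b c ha hb hc hs hn).
  assert (H2 := amgm3 a' b' c' ha' hb' hc' hs' hn').
  assert (K : a'*b'*c' - a*b*c = (l - 1) * ((l+2)/6 * (3*(a*b*c) - (a*b+b*c+c*a)/3)
              + (2*l+1)/(6*l^2) * (3*(a'*b'*c') - (a'*b'+b'*c'+c'*a')/3))).
  { rewrite ea, eb, ec. replace c with (1 - a - b) by lra. field. lra. }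
  assert (Bn : (l+2)/6 * (3*(a*b*c) - (a*b+b*c+c*a)/3)
              + (2*l+1)/(6*l^2) * (3*(a'*b'*c') - (a'*b'+b'*c'+c'*a')/3) < 0).
  { assert (0 < (l+2)/6) by (apply Rdiv_lt_0_compat; lra).
    assert (0 < (2*l+1)/(6*l^2)) by (apply Rdiv_lt_0_compat; [lra|]; assert (0 < l^2) by (apply pow_lt; lra); lra).
    assert ((l+2)/6 * (3*(a*b*c) - (a*b+b*c+c*a)/3) < 0) by nra.
    nra. }
  assert (l = 1).
  { set (B := (l+2)/6 * (3*(a*b*c) - (a*b+b*c+c*a)/3)
              + (2*l+1)/(6*l^2) * (3*(a'*b'*c') - (a'*b'+b'*c'+c'*a')/3)) in *.
    assert (K2 : (l-1)*B = 0) by lra. apply Rmult_integral in K2. destruct K2; lra. }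
  subst l.
  rewrite H in ea, eb, ec. lra.
Qed.

Lemma om_ineq x y z m : 0 < m -> m <= x -> m <= y -> m <= z -> x + y + z = 1 ->
  m * ((y-z)^2 + (3*x-1)^2) <= (y-z)^2*(9*x-1) + (1-x)*(3*x-1)^2.
Proof.
  intros. destruct (Rle_dec 0 (9*x - 1 - m)).
  - assert (0 <= (y-z)^2 * (9*x-1-m)) by (apply Rmult_le_pos; [apply pow2_ge_0|lra]).
    assert (0 <= (3*x-1)^2 * (1-x-m)) by (apply Rmult_le_pos; [apply pow2_ge_0|lra]). nra.
  - assert (HN : (y - z)^2 <= (1 - x - 2*m)^2) by nra.
    assert (Hf : (1 + m - 9*x) * (1-x-2*m)^2 <= (3*x-1)^2 * (1-x-m)).
    { assert (0 <= (x - m)) by lra. assert (0 <= 1 + m - 9*x) by lra. nra. }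
    nra.
Qed.

Ltac dt hs := repeat first [ apply D_const | (apply hs; lia) | eapply D_minus | eapply D_plus | eapply D_mult ].

Section Angle.
Variable phi : R -> nat -> R.
Hypothesis hs : Fsol phi.
Hypothesis hint : forall t, in_interior3 (phi t).
Hypothesis hnc : forall t, ~ is_center3 (phi t).

Definition Dt t := 3 * phi t 0%nat - 1.
Definition Nt t := phi t 1%nat - phi t 2%nat.
Definition dD t := 3 * Fp (phi t) 0%nat.
Definition dN t := Fp (phi t) 1%nat - Fp (phi t) 2%nat.
Definition r2 t := Dt t * Dt t + Nt t * Nt t.
Definition om t := (Dt t * dN t - Nt t * dD t) / r2 t.

Lemma r2_pos t : 0 < r2 t.
Proof.
  unfold r2, Dt, Nt. destruct (hint t) as [h0 [h1 [h2 h3]]]. assert (hn := hnc t).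
  set (d := 3 * phi t 0%nat - 1). set (n := phi t 1%nat - phi t 2%nat).
  destruct (Req_dec d 0).
  - destruct (Req_dec n 0). exfalso; apply hn; unfold is_center3, d, n in *; lra.
    assert (H1 := sq_pos n H0). assert (H2 := pow2_ge_0 d). simpl in *. lra.
  - assert (H1 := sq_pos d H). assert (H2 := pow2_ge_0 n). simpl in *. lra.
Qed.

Lemma dDt t : derivable_pt_lim Dt t (dD t).
Proof. unfold Dt, dD. eapply D_val; [dt hs|cbv beta; ring]. Qed.
Lemma dNt t : derivable_pt_lim Nt t (dN t).
Proof. unfold Nt, dN. eapply D_val; [dt hs|cbv beta; ring]. Qed.

Lemma om_cont t : continuous om t.
Proof.
  assert (hr := r2_pos t).
  eapply D_continuous. unfold om, dN, dD, Fp, Qf. unfold r2 in *. unfold Dt, Nt in *.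
  eapply D_div. dt hs. dt hs. lra.
Qed.

Definition th t := RInt om 0 t.
Lemma dth t : derivable_pt_lim th t (om t).
Proof. unfold th. apply RInt_deriv. apply om_cont. Qed.
Lemma th0 : th 0 = 0.
Proof. unfold th. rewrite RInt_point. reflexivity. Qed.

Lemma dcos t : derivable_pt_lim (fun t => cos (th t)) t (om t * - sin (th t)).
Proof. exact (D_comp cos th t (- sin (th t)) (om t) (D_cos (th t)) (dth t)). Qed.
Lemma dsin t : derivable_pt_lim (fun t => sin (th t)) t (om t * cos (th t)).
Proof. exact (D_comp sin th t (cos (th t)) (om t) (D_sin (th t)) (dth t)). Qed.

Definition At t := Dt t * cos (th t) + Nt t * sin (th t).
Definition Bt t := Nt t * cos (th t) - Dt t * sin (th t).
Lemma dAt t : derivable_pt_lim At t (dD t * cos (th t) + Dt t * (om t * - sin (th t))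
   + (dN t * sin (th t) + Nt t * (om t * cos (th t)))).
Proof. unfold At. apply D_plus. apply (D_mult Dt (fun s => cos (th s))); [apply dDt|apply dcos].
  apply (D_mult Nt (fun s => sin (th s))); [apply dNt|apply dsin]. Qed.
Lemma dBt t : derivable_pt_lim Bt t (dN t * cos (th t) + Nt t * (om t * - sin (th t))
   - (dD t * sin (th t) + Dt t * (om t * cos (th t)))).
Proof. unfold Bt. apply D_minus. apply (D_mult Nt (fun s => cos (th s))); [apply dNt|apply dcos].
  apply (D_mult Dt (fun s => sin (th s))); [apply dDt|apply dsin]. Qed.

Lemma dr2 t : derivable_pt_lim r2 t (dD t * Dt t + Dt t * dD t + (dN t * Nt t + Nt t * dN t)).
Proof. unfold r2. apply D_plus. apply (D_mult Dt Dt); apply dDt. apply (D_mult Nt Nt); apply dNt. Qed.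

Lemma quad_const (P : R -> R) (c1 c2 : R) :
  (forall t, P t = c1 * At t + c2 * Bt t) -> forall t, P t * P t / r2 t = P 0 * P 0 / r2 0.
Proof.
  intros hP. 
  set (dP := fun t => c1 * (dD t * cos (th t) + Dt t * (om t * - sin (th t))
   + (dN t * sin (th t) + Nt t * (om t * cos (th t)))) + c2 * (dN t * cos (th t) + Nt t * (om t * - sin (th t))
   - (dD t * sin (th t) + Dt t * (om t * cos (th t))))).
  assert (DP : forall t, derivable_pt_lim P t (dP t)).
  { intro t. apply (D_ext (fun t => c1 * At t + c2 * Bt t)). intro; symmetry; auto.
    eapply D_val. apply D_plus. apply (D_mult (fun _ => c1) At). apply D_const. apply dAt.
    apply (D_mult (fun _ => c2) Bt). apply D_const. apply dBt. unfold dP. cbv beta. ring. }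
  intro t. apply (D_const_fun (fun t => P t * P t / r2 t) (fun _ => 0)).
  - intro s. assert (hr := r2_pos s). eapply D_val.
    apply D_div. apply (D_mult P P); apply DP. apply dr2. lra.
    cbv beta. rewrite !hP. unfold dP, om. unfold At, Bt in *. unfold r2 in *. field. lra.
  - auto.
Qed.

Lemma cos_th0 : cos (th 0) = 1.
Proof. rewrite th0. apply cos_0. Qed.
Lemma sin_th0 : sin (th 0) = 0.
Proof. rewrite th0. apply sin_0. Qed.

Lemma At0 : At 0 = Dt 0.
Proof. unfold At. rewrite cos_th0, sin_th0. ring. Qed.
Lemma Bt0 : Bt 0 = Nt 0.
Proof. unfold Bt. rewrite cos_th0, sin_th0. ring. Qed.

Lemma Z_zero t : At t * Nt 0 - Bt t * Dt 0 = 0.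
Proof.
  assert (E := quad_const (fun t => At t * Nt 0 - Bt t * Dt 0) (Nt 0) (- Dt 0) ltac:(intro; cbv beta; ring) t).
  cbv beta in E. rewrite At0, Bt0 in E.
  replace (Dt 0 * Nt 0 - Nt 0 * Dt 0) with 0 in E by ring.
  assert (hr := r2_pos t). 
  set (z := At t * Nt 0 - Bt t * Dt 0) in *.
  assert (z * z = 0).
  { replace (z * z) with ((z * z / r2 t) * r2 t) by (field; lra). rewrite E. unfold Rdiv. ring. }
  nra.
Qed.

Lemma Y_pos t : 0 < At t * Dt 0 + Bt t * Nt 0.
Proof.
  assert (E := quad_const (fun t => At t * Dt 0 + Bt t * Nt 0) (Dt 0) (Nt 0) ltac:(intro; cbv beta; ring)).
  cbv beta in E. assert (h0 := r2_pos 0).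
  assert (Y0 : At 0 * Dt 0 + Bt 0 * Nt 0 = r2 0).
  { unfold At, Bt, r2. rewrite cos_th0, sin_th0. ring. }
  rewrite Y0 in E.
  apply (pos_stay (fun t => At t * Dt 0 + Bt t * Nt 0)).
  - intro s. eapply D_cont. apply D_plus. apply (D_mult At (fun _ => Dt 0)). apply dAt. apply D_const.
    apply (D_mult Bt (fun _ => Nt 0)). apply dBt. apply D_const.
  - rewrite Y0. auto.
  - intros s e. specialize (E s). rewrite e in E.
    replace (0 * 0 / r2 s) with 0 in E by (unfold Rdiv; ring).
    replace (r2 0 * r2 0 / r2 0) with (r2 0) in E by (field; lra). lra.
Qed.

Lemma om_alg x y z m : 0 < m -> 0 < x -> 0 < y -> 0 < z -> x + y + z = 1 -> x * y * z = m ->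
  m / 3 * ((3*x-1)*(3*x-1) + (y-z)*(y-z)) <=
  (3*x-1) * (y*(x-z)*(x*x+y*y+z*z+x*y+y*z+z*x) - z*(y-x)*(x*x+y*y+z*z+x*y+y*z+z*x))
  - (y-z) * (3 * (x*(z-y)*(x*x+y*y+z*z+x*y+y*z+z*x))).
Proof.
  intros hm hx hy hz hsum hp.
  assert (mx : m <= x).
  { rewrite <- hp. assert (y * z <= 1) by nra. assert (0 < y*z) by nra. nra. }
  assert (my : m <= y).
  { rewrite <- hp. assert (x * z <= 1) by nra. assert (0 < x*z) by nra. nra. }
  assert (mz : m <= z).
  { rewrite <- hp. assert (x * y <= 1) by nra. assert (0 < x*y) by nra. nra. }
  set (Q := x*x+y*y+z*z+x*y+y*z+z*x).
  assert (hq : 2/3 <= Q).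
  { unfold Q. replace z with (1 - x - y) by lra.
    assert (H1 := pow2_ge_0 (x - y)). assert (H2 := pow2_ge_0 (x + y - 2/3)). nra. }
  assert (ineq := om_ineq x y z m hm mx my mz hsum).
  assert (idt : (3*x-1) * (y*(x-z)*Q - z*(y-x)*Q) - (y-z) * (3 * (x*(z-y)*Q))
     = Q * ((y-z)^2*(9*x-1) + (1-x)*(3*x-1)^2) / 2).
  { unfold Q. replace z with (1 - x - y) by lra. field. }
  rewrite idt.
  replace ((3 * x - 1) * (3 * x - 1) + (y - z) * (y - z)) with ((y-z)^2 + (3*x-1)^2) by ring.
  assert (0 <= (y-z)^2 + (3*x-1)^2) by (assert (H1 := pow2_ge_0 (y-z)); assert (H2 := pow2_ge_0 (3*x-1)); lra).
  set (R2 := (y-z)^2 + (3*x-1)^2) in *. set (Qp := (y-z)^2*(9*x-1) + (1-x)*(3*x-1)^2) in *.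
  assert (0 <= m * R2) by (apply Rmult_le_pos; lra).
  assert (0 <= (Q - 2/3) * Qp) by (apply Rmult_le_pos; lra).
  lra.
Qed.

Lemma om_lower t : 0 < phi 0 0%nat * phi 0 1%nat * phi 0 2%nat ->
  (phi 0 0%nat * phi 0 1%nat * phi 0 2%nat) / 3 <= om t.
Proof.
  intro hm. assert (hp := Fsol_prod phi hs t).
  destruct (hint t) as [h0 [h1 [h2 h3]]].
  assert (A := om_alg _ _ _ _ hm h0 h1 h2 h3 hp).
  assert (hr := r2_pos t).
  unfold om. apply (Rmult_le_reg_r (r2 t)); auto.
  replace ((Dt t * dN t - Nt t * dD t) / r2 t * r2 t) with (Dt t * dN t - Nt t * dD t) by (field; lra).
  unfold r2, Dt, Nt, dN, dD, Fp, Qf. exact A.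
Qed.

Lemma th_lower t : 0 < phi 0 0%nat * phi 0 1%nat * phi 0 2%nat -> 0 <= t ->
  (phi 0 0%nat * phi 0 1%nat * phi 0 2%nat) / 3 * t <= th t.
Proof.
  intros hm ht. unfold th.
  assert (E := RInt_le (fun _ => (phi 0 0%nat * phi 0 1%nat * phi 0 2%nat) / 3) om 0 t ht
     (ex_RInt_cont _ _ _ (cont_const _)) (ex_RInt_cont _ _ _ om_cont) ltac:(intros; apply om_lower; auto)).
  rewrite RInt_const in E. change (scal ?a ?b) with (a * b) in E. rewrite Rminus_0_r in E. lra.
Qed.

Lemma return_point : 0 < phi 0 0%nat * phi 0 1%nat * phi 0 2%nat ->
  exists T, 0 < T /\ Dt T * Nt 0 - Nt T * Dt 0 = 0 /\ 0 < Dt T * Dt 0 + Nt T * Nt 0.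
Proof.
  intro hm. set (m := phi 0 0%nat * phi 0 1%nat * phi 0 2%nat) in *.
  set (t1 := 6 * PI / m).
  assert (ht1 : 0 <= t1) by (unfold t1; assert (PI > 0) by apply PI_RGT_0; apply Rlt_le, Rdiv_lt_0_compat; lra).
  assert (L := th_lower t1 hm ht1). fold m in L.
  replace (m / 3 * t1) with (2 * PI) in L by (unfold t1; field; lra).
  assert (cth : continuity th) by (intro s; eapply D_cont; apply dth).
  destruct (IVT_gen th 0 t1 (2 * PI) cth) as [T [hT eT]].
  { rewrite th0. assert (PI > 0) by apply PI_RGT_0. unfold Rmin, Rmax. destruct (Rle_dec 0 (th t1)); lra. }
  rewrite Rmin_left, Rmax_right in hT by lra.
  exists T. assert (PI > 0) by apply PI_RGT_0.
  assert (T <> 0) by (intro e; rewrite e, th0 in eT; lra).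
  assert (hz := Z_zero T). assert (hy := Y_pos T).
  unfold At, Bt in hz, hy. rewrite eT, cos_2PI, sin_2PI in hz, hy.
  split; [lra|]. split; lra.
Qed.
End Angle.

Lemma Fsol_of_sol a b phi : 0 < a -> 0 < b -> is_solution3 (ibr 3 (rps a b)) phi -> Fsol phi.
Proof. intros ha hb h t i hi. rewrite <- (ibr_poly a b) by auto. apply h; auto. Qed.

Lemma part3 a b : 0 < a -> 0 < b ->
  (forall x0 : nat -> R, in_interior3 x0 -> ~ is_center3 x0 ->
     (exists phi : R -> nat -> R,
        is_solution3 (ibr 3 (rps a b)) phi /\
        forall i : nat, (i < 3)%nat -> phi 0 i = x0 i) /\
     (forall phi : R -> nat -> R,
        is_solution3 (ibr 3 (rps a b)) phi ->
        (forall i : nat, (i < 3)%nat -> phi 0 i = x0 i) ->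
        (exists T : R, 0 < T /\
           forall (t : R) (i : nat), (i < 3)%nat -> phi (t + T) i = phi t i) /\
        (exists (t : R) (i : nat), (i < 3)%nat /\ phi t i <> x0 i))).
Proof.
  intros ha hb x0 hx hnx. split.
  - destruct (existence x0 hx) as [hs hi]. exists (xs x0). split; auto.
    intros t i hi'. rewrite ibr_poly by auto. apply hs; auto.
  - intros phi hsol hinit. assert (hs := Fsol_of_sol a b phi ha hb hsol).
    assert (hint0 : in_interior3 (phi 0)).
    { unfold in_interior3 in *. rewrite !hinit by lia. auto. }
    assert (hint := Fsol_interior phi hs hint0).
    assert (hbox : forall t, box (phi t)) by (intro; apply interior_box; auto).
    set (cst := fun (_ : R) (_ : nat) => 1/3).
    assert (hcst : Fsol cst).
    { intros t i hi. unfold cst. eapply D_val. apply D_const.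
      destruct i as [|[|[|i]]]; [| | | lia]; unfold Fp, Qf; ring. }
    assert (bcst : forall t, box (cst t)) by (intro; unfold box, cst; lra).
    assert (hnc : forall t, ~ is_center3 (phi t)).
    { intros t1 hc. apply hnx. destruct hc as [c0 [c1 c2]].
      assert (U := Fsol_unique phi cst hs hcst hbox bcst t1
        ltac:(intros i hi; destruct i as [|[|[|i]]]; [auto|auto|auto|lia]) 0).
      unfold is_center3. rewrite <- !hinit by lia. rewrite !U by lia. unfold cst. auto. }
    assert (hm : 0 < phi 0 0%nat * phi 0 1%nat * phi 0 2%nat).
    { destruct hint0 as [h0 [h1 [h2 _]]]. apply Rmult_lt_0_compat; auto. apply Rmult_lt_0_compat; auto. }
    split.
    + destruct (return_point phi hs hint hnc hm) as [T [hT [hz hy]]].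
      exists T. split; auto.
      destruct (hint 0) as [p0 [p1 [p2 p3]]]. destruct (hint T) as [q0 [q1 [q2 q3]]].
      assert (hp := Fsol_prod phi hs T).
      unfold Dt, Nt in hz, hy.
      destruct (same_point_R (phi 0 0%nat) (phi 0 1%nat) (phi 0 2%nat) (phi T 0%nat) (phi T 1%nat) (phi T 2%nat)
        p0 p1 p2 p3 q0 q1 q2 q3 (eq_sym hp) (hnc 0) (hnc T) hz hy) as [e0 [e1 e2]].
      set (psi := fun t i => phi (t + T) i).
      assert (hpsi : Fsol psi).
      { intros t i hi. unfold psi.
        apply (D_val _ _ (1 * Fp (phi (t + T)) i)); [|rewrite Rmult_1_l; reflexivity].
        apply (D_comp (fun s => phi s i) (fun s => s + T) t).
        apply hs; auto. eapply D_val. apply D_plus; [apply D_id|apply D_const]. ring. }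
      assert (bpsi : forall t, box (psi t)) by (intro; unfold psi; auto).
      intros t i hi.
      apply (Fsol_unique psi phi hpsi hs bpsi hbox 0); auto.
      intros j hj. unfold psi. rewrite Rplus_0_l.
      destruct j as [|[|[|j]]]; [auto|auto|auto|lia].
    + apply NNPP. intro H.
      assert (const : forall t i, (i < 3)%nat -> phi t i = x0 i).
      { intros t i hi. destruct (Req_dec (phi t i) (x0 i)) as [e|e]; auto.
        exfalso. apply H. exists t, i. auto. }
      apply hnx. apply (part2 a b ha hb x0 hx). intros i hi.
      rewrite ibr_poly by auto.
      assert (d1 := hs 0 i hi).
      assert (d2 : derivable_pt_lim (fun s => phi s i) 0 0).
      { apply (D_ext (fun _ => x0 i)). intro s. symmetry. apply const; auto. apply D_const. }
      assert (E := uniqueness_limite _ _ _ _ d1 d2).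
      rewrite <- E. apply Fp_ext. intros j hj. symmetry. apply hinit; auto.
Qed.

Theorem proposition4 (a b : R) (ha : 0 < a) (hb : 0 < b) :
  (* the IBR dynamics for A has the stated explicit form on Delta *)
  (forall x : nat -> R, in_simplex3 x ->
     let '(p, q, r) := (x 0%nat, x 1%nat, x 2%nat) in
     ibr 3 (rps a b) x 0%nat = p * (r - q) * (1 - p*q - p*r - q*r) /\
     ibr 3 (rps a b) x 1%nat = q * (p - r) * (1 - p*q - p*r - q*r) /\
     ibr 3 (rps a b) x 2%nat = r * (q - p) * (1 - p*q - p*r - q*r)) /\
  (* the unique interior rest point is (1/3,1/3,1/3) *)
  (forall x : nat -> R, in_interior3 x ->
     ((forall i : nat, (i < 3)%nat -> ibr 3 (rps a b) x i = 0) <-> is_center3 x)) /\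
  (* every solution from an interior non-center state is a nonconstant periodic orbit *)
  (forall x0 : nat -> R, in_interior3 x0 -> ~ is_center3 x0 ->
     (exists phi : R -> nat -> R,
        is_solution3 (ibr 3 (rps a b)) phi /\
        forall i : nat, (i < 3)%nat -> phi 0 i = x0 i) /\
     (forall phi : R -> nat -> R,
        is_solution3 (ibr 3 (rps a b)) phi ->
        (forall i : nat, (i < 3)%nat -> phi 0 i = x0 i) ->
        (exists T : R, 0 < T /\
           forall (t : R) (i : nat), (i < 3)%nat -> phi (t + T) i = phi t i) /\
        (exists (t : R) (i : nat), (i < 3)%nat /\ phi t i <> x0 i))).
Proof.
  split; [apply part1; auto|]. split; [apply part2; auto|]. apply part3; auto.
Qed.
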